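(* Let $\mathcal{N}>0$ be real, $n\ge0$ an integer, and put $\nu=\mathcal{N}+\tfrac12-n$. Then \[ \mathcal{H}_{n}^{\mathcal{N}}\!\left(X\sqrt{\mathcal{N}}\right)=\alpha_{n,\nu}\,n!\left(\frac{\nu}{\mathcal{N}}\right)^{\frac{n}{2}}\left(1+X^{2}\right)^{\frac{n}{2}}\,\mathcal{C}_{n}^{\nu}\!\left(\frac{X\sqrt{\nu}}{\sqrt{1+X^{2}}}\right), \qquad \alpha_{n,\nu}=\frac{(2\nu)_n}{2^n\,n!\,(\nu+\frac12)_n}. \]
   Context: $(a)_n=a(a+1)\cdots(a+n-1)$ denotes the Pochhammer symbol. For $\mathcal{N}>0$ and integer $n\ge0$, the Cari\~{n}ena polynomial with positive parameter is \[ \mathcal{H}_n^{\mathcal{N}}(X)=(-1)^n\left(1+\frac{X^2}{\mathcal{N}}\right)^{\mathcal{N}+\frac12}\frac{d^n}{dX^n}\left(1+\frac{X^2}{\mathcal{N}}\right)^{n-\mathcal{N}-\frac12}. \] For a real parameter $\nu\neq0$, the Cari\~{n}ena polynomial with parameter $-\nu$ is \[ \mathcal{C}_n^{\nu}(X)=(-1)^n\left(1-\frac{X^2}{\nu}\right)^{\frac12-\nu}\frac{d^n}{dX^n}\left(1-\frac{X^2}{\nu}\right)^{n+\nu-\frac12}. \] Both sides of the claimed identity are regarded as functions (polynomial expressions) in $X$. *)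

(* Defs.v *)
From HB Require Import structures.
From mathcomp Require Import all_boot all_order all_algebra.
From mathcomp Require Import all_classical all_reals.
From mathcomp Require Import interval_inference topology normedtype derive exp.
From mathcomp Require Import complex.
Set Implicit Arguments. Unset Strict Implicit. Unset Printing Implicit Defensive.
Import Order.TTheory GRing.Theory Num.Theory.
Local Open Scope ring_scope.

Definition pochhammer {R : pzRingType} (a : R) (n : nat) : R :=
  \prod_(i < n) (a + i%:R).

Section Carinena.
Variable R : realType.

Definition carinenaH (n : nat) (N : R) (X : R) : R :=
  (-1) ^+ n * (1 + X ^+ 2 / N) `^ (N + 2^-1)
  * @derive1n R R^o n (fun Y : R => (1 + Y ^+ 2 / N) `^ (n%:R - N - 2^-1)) X.

(* Rodrigues expression for parameter -nu:
   (-1)^n (1 - X^2/nu)^(1/2-nu) d^n/dX^n (1 - X^2/nu)^(n+nu-1/2),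
   meaningful on the open set where 1 - X^2/nu > 0. *)
Definition carinenaC_rod (n : nat) (nu : R) (X : R) : R :=
  (-1) ^+ n * (1 - X ^+ 2 / nu) `^ (2^-1 - nu)
  * @derive1n R R^o n (fun Y : R => (1 - Y ^+ 2 / nu) `^ (n%:R + nu - 2^-1)) X.

(* The Carinena polynomial C_n^nu as a polynomial: the polynomial that agrees
   with the Rodrigues expression wherever that expression is defined
   (1 - X^2/nu > 0, a nonempty open interval, so it is unique if it exists). *)
Definition carinenaC (n : nat) (nu : R) : {poly R} :=
  xget 0 [set p : {poly R} |
           forall X : R, 0 < 1 - X ^+ 2 / nu -> p.[X] = carinenaC_rod n nu X].

Definition alpha (n : nat) (nu : R) : R :=
  pochhammer (2 * nu) n / (2 ^+ n * n`!%:R * pochhammer (nu + 2^-1) n).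

End Carinena.

(* Main.v *)
Require Import Defs.
From HB Require Import structures.
From mathcomp Require Import all_boot all_order all_algebra.
From mathcomp Require Import all_classical all_reals.
From mathcomp Require Import interval_inference topology normedtype derive exp.
From mathcomp Require Import complex.
From mathcomp Require Import realfun.
From mathcomp Require Import ring lra zify.
Import Order.TTheory GRing.Theory Num.Theory.
Local Open Scope ring_scope.
Set Implicit Arguments. Unset Strict Implicit. Unset Printing Implicit Defensive.

Section Ana.
Variable R : realType.

Definition Gp (c : R) : {poly R} := 1 + c *: 'X^2.

Fixpoint Pk (c a : R) (k : nat) : {poly R} :=
  match k with
  | 0 => 1
  | k'.+1 => Gp c * (Pk c a k')^`() + ((a - k'%:R) * 2 * c) *: ('X * Pk c a k')
  end.

Lemma Gp_deriv c : (Gp c)^`() = (2 * c) *: 'X.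
Proof.
rewrite /Gp derivD derivC add0r derivZ derivXn /=.
by rewrite expr1 -scaler_nat scalerA mulrC.
Qed.

Lemma deriv_powG (c a : R) (k : nat) (Y : R) :
  0 < (Gp c).[Y] ->
  @derive1n R R^o k (fun Z : R => (Gp c).[Z] `^ a) Y
  = (Pk c a k).[Y] * (Gp c).[Y] `^ (a - k%:R).
Proof.
elim: k Y => [|k IH] Y HY.
  by rewrite derive1n0 /= hornerC mul1r subr0.
rewrite derive1nS derive1E.
rewrite (@near_eq_derive _ R^o R^o _ (fun Z : R => (Pk c a k).[Z] * (Gp c).[Z] `^ (a - k%:R))); last first.
  near=> Z; rewrite IH //.
  near: Z.
  have := @continuous_horner R (Gp c) Y _ (lt_nbhsr HY).
  by [].
have Hd : @is_derive R R^o R^o Y 1 (fun Z => (Pk c a k).[Z] * (Gp c).[Z] `^ (a - k%:R))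
   ((Pk c a k).[Y] * ((a - k%:R) * (Gp c).[Y] `^ (a - k%:R - 1) * (Gp c)^`().[Y])
    + (Gp c).[Y] `^ (a - k%:R) * (Pk c a k)^`().[Y]).
  have h1 := is_derive_poly (Pk c a k) Y.
  have h2 : @is_derive R R^o R^o Y 1 ((fun x => x `^ (a - k%:R)) \o horner (Gp c))
     ((a - k%:R) * (Gp c).[Y] `^ (a - k%:R - 1) * (Gp c)^`().[Y]).
    apply: is_derive1_comp => //.
    exact: is_derive1_powR.
  apply: (is_derive_eq (is_deriveM h1 h2)).
  by [].
rewrite (@derive_val _ _ _ _ _ _ _ Hd) /=.
have -> : a - k.+1%:R = a - k%:R - 1 by rewrite -natr1; ring.
have HgY : (Gp c).[Y] `^ (a - k%:R) = (Gp c).[Y] `^ (a - k%:R - 1) * (Gp c).[Y].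
  rewrite -{3}(powRr1 (ltW HY)) -powRD; first by congr (_ `^ _); ring.
  by apply/implyP => _; rewrite gt_eqF.
rewrite HgY Gp_deriv !hornerE /=.
set u := (_ `^ _). ring.
Unshelve. all: by end_near. Qed.


Definition ff (x : R) (m : nat) : R := \prod_(i < m) (x - i%:R).
Definition pch (x : R) (m : nat) : R := \prod_(i < m) (x + i%:R).

Lemma ffS x m : ff x m.+1 = ff x m * (x - m%:R).
Proof. by rewrite /ff big_ord_recr. Qed.

Lemma ffSl x m : ff (x + 1) m.+1 = (x + 1) * ff x m.
Proof.
rewrite /ff big_ord_recl subr0; congr (_ * _); apply: eq_bigr => i _.
by rewrite /bump /= -natr1; ring.
Qed.

Lemma ff0 x : ff x 0 = 1. Proof. by rewrite /ff big_ord0. Qed.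

Lemma ff_nat0 k m : (k < m)%N -> ff k%:R m = 0.
Proof.
move=> km; rewrite /ff (bigD1 (Ordinal km)) //= subrr mul0r //.
Qed.

Lemma pchS x m : pch x m.+1 = pch x m * (x + m%:R).
Proof. by rewrite /pch big_ord_recr. Qed.

Lemma pch0 x : pch x 0 = 1. Proof. by rewrite /pch big_ord0. Qed.

Lemma pch_neq0 x m : (forall i, (i < m)%N -> x + i%:R != 0) -> pch x m != 0.
Proof.
move=> H; rewrite /pch; apply/prodf_neq0 => i _; exact: H.
Qed.



Definition u2 (nu c : R) (k j : nat) : R :=
  ff k%:R (2 * j) / j`!%:R * (-1) ^+ (k - j) * 4^-1 ^+ j
  * pch (2 * nu) k / pch (nu + 2^-1) j * c ^+ (k - j).

Lemma u2_out nu c k j : (k < 2 * j)%N -> u2 nu c k j = 0.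
Proof. by move=> H; rewrite /u2 ff_nat0 // !mul0r. Qed.

Definition Aco (u : nat -> R) (k j : nat) : R :=
  match j with 0 => 0 | i.+1 => u i * (k%:R - 2 * i%:R) end.

Lemma R2_step_sum (nu c : R) (k : nat) :
  let u := u2 nu c k in
  let beta := (- nu - k%:R) * 2 * c in
  Gp c * (\sum_(j < k.+1) u j *: 'X^(k - 2 * j))^`()
    + beta *: ('X * \sum_(j < k.+1) u j *: 'X^(k - 2 * j))
  = \sum_(j < k.+2)
      ((Aco u k j + u j * (c * (k%:R - 2 * j%:R) + beta)) *: 'X^(k.+1 - 2 * j)).
Proof.
move=> u beta.
rewrite [RHS](_ : _ = \sum_(j < k.+2) (Aco u k j *: 'X^(k.+1 - 2 * j))
   + \sum_(j < k.+2) ((u j * (c * (k%:R - 2 * j%:R) + beta)) *: 'X^(k.+1 - 2 * j))); last first.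
  by rewrite -big_split; apply: eq_bigr => j _; rewrite scalerDl.
rewrite [X in _ = X + _]big_ord_recl /= scale0r add0r.
have hu : u k.+1 = 0 by apply: u2_out; lia.
rewrite [X in _ = _ + X]big_ord_recr /= hu mul0r scale0r addr0.
rewrite raddf_sum mulr_sumr mulr_sumr scaler_sumr -big_split /=.
rewrite -big_split /=; apply: eq_bigr => j _.
rewrite /bump /= !add0n.
case: j => j /= _.
case: (leqP (2 * j) k) => Hjk; last first.
  by rewrite /u u2_out // !mul0r !scale0r deriv0 mulr0 mulr0 scaler0 !addr0.
have [d ->] : exists d, k = (2 * j + d)%N by exists (k - 2 * j)%N; lia.
have -> : (2 * j + d - 2 * j = d)%N by lia.
have -> : ((2 * j + d).+1 - 2 * j.+1 = d.-1)%N by lia.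
have -> : ((2 * j + d).+1 - 2 * j = d.+1)%N by lia.
rewrite derivZ derivXn /Gp -!mul_polyC natrD natrM.
case: d => [|d] /=.
  by rewrite mulr0n expr0 expr1 !mulr0 !addr0; ring.
rewrite -mulr_natl !exprS -!natr1.
ring.
Qed.



Lemma u2_rec0 nu c k :
  u2 nu c k.+1 0 = u2 nu c k 0 * (c * (k%:R - 2 * 0%:R) + (- nu - k%:R) * 2 * c).
Proof.
rewrite /u2 !muln0 ff0 fact0 !expr0 pch0 !subn0 pchS !exprS.
rewrite !invr1 !mulr1 ff0 mul1r mulr0 subr0. ring.
Qed.

Lemma u2_rec nu c k i : (forall t, (t < k)%N -> nu + 2^-1 + t%:R != 0) ->
  u2 nu c k.+1 i.+1 = u2 nu c k i * (k%:R - 2 * i%:R)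
    + u2 nu c k i.+1 * (c * (k%:R - 2 * i.+1%:R) + (- nu - k%:R) * 2 * c).
Proof.
move=> Hq.
case: (leqP (2 * i).+1 k) => Hik; last first.
  rewrite (@u2_out nu c k.+1 i.+1); last by lia.
  rewrite (@u2_out nu c k i.+1); last by lia.
  case: (ltnP k (2 * i)) => H2.
    by rewrite u2_out // !mul0r addr0.
  have -> : k = (2 * i)%N by lia.
  by rewrite natrM subrr !mulr0 mul0r addr0.
have Hq1 : nu + 2^-1 + i%:R != 0 by apply: Hq; lia.
have Hq0 : pch (nu + 2^-1) i != 0.
  by apply: pch_neq0 => t Ht; apply: Hq; lia.
have Hf : (i`!%:R : R) != 0 by rewrite pnatr_eq0 -lt0n fact_gt0.
rewrite /u2 subSS.
have -> : (k - i = (k - i.+1).+1)%N by lia.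
have -> : (2 * i.+1 = (2 * i).+2)%N by lia.
rewrite -natr1 ffSl !ffS !pchS factS !exprS !natrM -!natr1.
set e := (k - i.+1)%N.
field.
rewrite add0r Hq0 Hf natr1 pnatr_eq0 andbT /=.
apply: contra Hq1 => /eqP H; apply/eqP.
have -> : nu + 2^-1 + i%:R = (nu * 2 + 1 + i%:R * 2) / 2 by field.
by rewrite H mul0r.
Qed.



Lemma R2 nu c k : (forall t, (t < k)%N -> nu + 2^-1 + t%:R != 0) ->
  Pk c (- nu) k = \sum_(j < k.+1) u2 nu c k j *: 'X^(k - 2 * j).
Proof.
elim: k => [|k IH] Hq.
  rewrite big_ord1 /= /u2 ff0 fact0 !expr0 !pch0 invr1 !mulr1 scale1r //.
rewrite /= IH; last by move=> t Ht; apply: Hq; lia.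
have -> : (- nu - k%:R) * 2 * c = (- nu - k%:R) * 2 * c by [].
rewrite R2_step_sum; apply: eq_bigr => j _; congr (_ *: _).
case: j => [[|i] Hi] /=.
  by rewrite add0r u2_rec0.
by rewrite u2_rec // => t Ht; apply: Hq; lia.
Qed.



Definition u1 (a c : R) (k j : nat) : R :=
  ff k%:R (2 * j) / j`!%:R * ff a (k - j) * c ^+ (k - j) * 2 ^+ k * 4^-1 ^+ j.

Lemma u1_out a c k j : (k < 2 * j)%N -> u1 a c k j = 0.
Proof. by move=> H; rewrite /u1 ff_nat0 // !mul0r. Qed.

Lemma R1_step_sum (a c : R) (k : nat) :
  let u := u1 a c k in
  let beta := (a - k%:R) * 2 * c in
  Gp c * (\sum_(j < k.+1) u j *: ('X^(k - 2 * j) * Gp c ^+ j))^`()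
    + beta *: ('X * \sum_(j < k.+1) u j *: ('X^(k - 2 * j) * Gp c ^+ j))
  = \sum_(j < k.+2)
      ((Aco u k j + u j * (2 * c * j%:R + beta)) *: ('X^(k.+1 - 2 * j) * Gp c ^+ j)).
Proof.
move=> u beta.
rewrite [RHS](_ : _ = \sum_(j < k.+2) (Aco u k j *: ('X^(k.+1 - 2 * j) * Gp c ^+ j))
   + \sum_(j < k.+2) ((u j * (2 * c * j%:R + beta)) *: ('X^(k.+1 - 2 * j) * Gp c ^+ j))); last first.
  by rewrite -big_split; apply: eq_bigr => j _; rewrite scalerDl.
rewrite [X in _ = X + _]big_ord_recl /= scale0r add0r.
have hu : u k.+1 = 0 by apply: u1_out; lia.
rewrite [X in _ = _ + X]big_ord_recr /= hu mul0r scale0r addr0.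
rewrite raddf_sum mulr_sumr mulr_sumr scaler_sumr -big_split /=.
rewrite -big_split /=; apply: eq_bigr => j _.
rewrite /bump /= !add0n.
case: j => j /= _.
case: (leqP (2 * j) k) => Hjk; last first.
  by rewrite /u u1_out // !mul0r !scale0r deriv0 mulr0 mulr0 scaler0 !addr0.
have [d ->] : exists d, k = (2 * j + d)%N by exists (k - 2 * j)%N; lia.
have -> : (2 * j + d - 2 * j = d)%N by lia.
have -> : ((2 * j + d).+1 - 2 * j.+1 = d.-1)%N by lia.
have -> : ((2 * j + d).+1 - 2 * j = d.+1)%N by lia.
rewrite derivZ derivM derivXn deriv_exp Gp_deriv -!mul_polyC natrD natrM.
set G := Gp c; clearbody G u beta.
case: d => [|d] /=; case: j {Hjk} => [|j] /=;
  rewrite ?mulr0n ?expr0 ?expr1 ?add0n ?add1n ?exprS -?natr1.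
all: ring.
Qed.



Lemma u1_rec0 a c k :
  u1 a c k.+1 0 = u1 a c k 0 * (2 * c * 0%:R + (a - k%:R) * 2 * c).
Proof.
rewrite /u1 !muln0 !ff0 fact0 !expr0 !subn0 ffS !exprS invr1 !mulr1.
ring.
Qed.

Lemma u1_rec a c k i :
  u1 a c k.+1 i.+1 = u1 a c k i * (k%:R - 2 * i%:R)
    + u1 a c k i.+1 * (2 * c * i.+1%:R + (a - k%:R) * 2 * c).
Proof.
case: (leqP (2 * i).+1 k) => Hik; last first.
  rewrite (@u1_out a c k.+1 i.+1); last by lia.
  rewrite (@u1_out a c k i.+1); last by lia.
  case: (ltnP k (2 * i)) => H2.
    by rewrite u1_out // !mul0r addr0.
  have -> : k = (2 * i)%N by lia.
  by rewrite natrM subrr !mulr0 mul0r addr0.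
have Hf : (i`!%:R : R) != 0 by rewrite pnatr_eq0 -lt0n fact_gt0.
rewrite /u1 subSS.
have -> : (k - i = (k - i.+1).+1)%N by lia.
have -> : (2 * i.+1 = (2 * i).+2)%N by lia.
have He : ((k - i.+1)%:R : R) = k%:R - i%:R - 1.
  by rewrite natrB; [rewrite -natr1; ring | lia].
rewrite -natr1 ffSl !ffS He factS !exprS !natrM -!natr1.
field.
by rewrite Hf natr1 pnatr_eq0.
Qed.

Lemma R1 a c k :
  Pk c a k = \sum_(j < k.+1) u1 a c k j *: ('X^(k - 2 * j) * Gp c ^+ j).
Proof.
elim: k => [|k IH].
  by rewrite big_ord1 /= /u1 !ff0 fact0 !expr0 invr1 !mulr1 scale1r.
rewrite /= IH R1_step_sum; apply: eq_bigr => j _; congr (_ *: _).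
case: j => [[|i] Hi] /=.
  by rewrite add0r u1_rec0.
by rewrite u1_rec.
Qed.


End Ana.

Section Ass.
Variable R : realType.

Lemma powR_cancel (g e f : R) : 0 < g -> e + f = 0 -> g `^ e * g `^ f = 1.
Proof.
move=> Hg Hef; rewrite -powRD ?Hef ?powRr0 //.
by apply/implyP => _; rewrite gt_eqF.
Qed.

Lemma carH_eq (N : R) (n : nat) (x : R) : 0 < N ->
  carinenaH n N x = (-1) ^+ n * (Pk N^-1 (n%:R - N - 2^-1) n).[x].
Proof.
move=> HN; rewrite /carinenaH.
have -> : (fun Y : R => (1 + Y ^+ 2 / N) `^ (n%:R - N - 2^-1))
        = (fun Y : R => (Gp N^-1).[Y] `^ (n%:R - N - 2^-1)).
  by apply/funext => Y; congr (_ `^ _); rewrite /Gp !hornerE /=; ring.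
have Hg : 0 < (Gp N^-1).[x].
  have h1 : 0 < N^-1 by rewrite invr_gt0.
  rewrite /Gp !hornerE /=; nra.
rewrite deriv_powG //.
have -> : 1 + x ^+ 2 / N = (Gp N^-1).[x] by rewrite /Gp !hornerE /=; ring.
rewrite [RHS](_ : _ = (-1) ^+ n * (Pk N^-1 (n%:R - N - 2^-1) n).[x] *
   ((Gp N^-1).[x] `^ (N + 2^-1) * (Gp N^-1).[x] `^ (n%:R - N - 2^-1 - n%:R))); last first.
  by rewrite powR_cancel ?mulr1 //; ring.
ring.
Qed.



Lemma poly_eq_on (nu : R) (p q : {poly R}) : nu != 0 ->
  (forall X : R, 0 < 1 - X ^+ 2 / nu -> p.[X] = q.[X]) -> p = q.
Proof.
move=> Hnu H; apply/eqP; rewrite -subr_eq0; apply/eqP.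
set s := Num.sqrt `|nu|.
have Hs : 0 < s by rewrite sqrtr_gt0 normr_gt0.
pose f := fun i : nat => s / (i.+2)%:R.
apply: (@roots_geq_poly_eq0 _ _ (mkseq f (size (p - q)))); last by rewrite size_mkseq.
- apply/allP => x /mapP [i _ ->]; rewrite rootE hornerD hornerN H ?subrr //.
  have Hm : 1 < (i.+2)%:R :> R by rewrite ltr1n.
  have Hm0 : 0 < (i.+2)%:R :> R by rewrite ltr0n.
  have -> : f i ^+ 2 / nu = (`|nu| / nu) / (i.+2)%:R ^+ 2.
    rewrite /f exprMn sqr_sqrtr ?normr_ge0 //; field.
    have h2 : 2 + i%:R = (i.+2)%:R :> R by rewrite -!natr1; ring.
    by rewrite h2 pnatr_eq0 Hnu.
  have Hm2 : 0 < ((i.+2)%:R ^+ 2 : R)^-1 < 1.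
    rewrite invr_gt0 exprn_gt0 //= invf_lt1 ?exprn_gt0 //.
    by rewrite expr_gt1 // ltW.
  case/andP: Hm2 => Ha Hb.
  case: (ltrgtP nu 0) => Hn; last by move: Hnu; rewrite Hn eqxx.
    rewrite ltr0_norm // mulNr divff // mulN1r; lra.
  by rewrite gtr0_norm // divff // mul1r subr_gt0.
- rewrite mkseq_uniq // => i j; rewrite /f => /(mulfI (lt0r_neq0 Hs)) /invr_inj /eqP.
  by rewrite eqr_nat => /eqP [].
Qed.



Lemma carC_eq (nu : R) (n : nat) : nu != 0 ->
  carinenaC n nu = (-1) ^+ n *: Pk (- nu^-1) (n%:R + nu - 2^-1) n.
Proof.
move=> Hnu.
have Hg : forall Y : R, (Gp (- nu^-1)).[Y] = 1 - Y ^+ 2 / nu.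
  by move=> Y; rewrite /Gp !hornerE /=; ring.
have HP : forall X : R, 0 < 1 - X ^+ 2 / nu ->
    ((-1) ^+ n *: Pk (- nu^-1) (n%:R + nu - 2^-1) n).[X] = carinenaC_rod n nu X.
  move=> X HX; rewrite /carinenaC_rod.
  have -> : (fun Y : R => (1 - Y ^+ 2 / nu) `^ (n%:R + nu - 2^-1))
          = (fun Y : R => (Gp (- nu^-1)).[Y] `^ (n%:R + nu - 2^-1)).
    by apply/funext => Y; rewrite Hg.
  rewrite deriv_powG ?Hg // hornerZ.
  rewrite [RHS](_ : _ = (-1) ^+ n * (Pk (- nu^-1) (n%:R + nu - 2^-1) n).[X] *
     ((1 - X ^+ 2 / nu) `^ (2^-1 - nu) * (1 - X ^+ 2 / nu) `^ (n%:R + nu - 2^-1 - n%:R)));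
    last by ring.
  by rewrite powR_cancel ?mulr1 //; ring.
rewrite /carinenaC; apply: xget_unique; first exact: HP.
move=> y Hy; apply: (poly_eq_on Hnu) => X HX.
by rewrite (Hy X HX) HP.
Qed.



Lemma pch_split (x : R) (j m : nat) :
  pch x (j + m) = pch x j * ff (x + (j + m)%:R - 1) m.
Proof.
elim: m => [|m IH]; first by rewrite addn0 ff0 mulr1.
rewrite addnS pchS IH.
have -> : x + (j + m).+1%:R - 1 = (x + (j + m)%:R - 1) + 1.
  by rewrite -natr1; ring.
by rewrite ffSl; ring.
Qed.

Lemma pochE (x : R) m : pochhammer x m = pch x m.
Proof. by []. Qed.

End Ass.

Lemma real_id (R : realType) (N nu X w : R) (i d : nat) : 0 < w -> N = w ^+ 2 -> nu != 0 ->
  N = nu + 2^-1 + (2 * i + d)%:R - 1 -> pch (nu + 2^-1) (2 * i + d) != 0 ->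
  u2 nu N^-1 (2 * i + d) i * (X * w) ^+ d
  = alpha (2 * i + d) nu * (2 * i + d)`!%:R * nu ^+ i * nu ^+ d * w^-1 ^+ (2 * i + d)
    * u1 N (- nu^-1) (2 * i + d) i * X ^+ d.
Proof.
move=> Hw HNw Hnu HN Hp.
have hP : pch (nu + 2^-1) (2 * i + d) = pch (nu + 2^-1) i * ff N (i + d).
  by rewrite (_ : (2 * i + d = i + (i + d))%N) ?pch_split ?HN //; [congr (_ * ff _ _); rewrite !natrD; ring | lia].
have hffN : ff N (i + d) != 0 by move: Hp; rewrite hP mulf_eq0 negb_or => /andP [].
have hQ : pch (nu + 2^-1) i != 0 by move: Hp; rewrite hP mulf_eq0 negb_or => /andP [].
rewrite /u2 /u1 /alpha !pochE hP.
have -> : ((2 * i + d) - i = i + d)%N by lia.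
set ffN := ff N (i + d).
set ffk := ff _ (2 * i).
set Q := pch (nu + 2^-1) i.
set P2 := pch (2 * nu) _.
set F := (2 * i + d)`!%:R.
have hF : F != 0 by rewrite pnatr_eq0 -lt0n fact_gt0.
have hi : (i`!%:R : R) != 0 by rewrite pnatr_eq0 -lt0n fact_gt0.
rewrite HNw.
have e1 : (w ^- 2) ^+ (i + d) = ((w ^+ i) ^+ 2 * (w ^+ d) ^+ 2)^-1.
  by rewrite exprVn; congr (_^-1); rewrite -!exprM -exprD; congr (_ ^+ _); lia.
have e2 : w^-1 ^+ (2 * i + d) = ((w ^+ i) ^+ 2 * w ^+ d)^-1.
  by rewrite exprVn; congr (_^-1); rewrite -!exprM -exprD; congr (_ ^+ _); lia.
have e4 : (- nu^-1) ^+ (i + d) = (-1) ^+ i * (-1) ^+ d / (nu ^+ i * nu ^+ d).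
  rewrite (_ : - nu^-1 = (-1) * nu^-1); last by ring.
  by rewrite exprMn exprD exprVn exprD.
rewrite e1 e2 e4 exprMn exprD.
have hw : w != 0 by rewrite gt_eqF.
field.
rewrite !expf_neq0 ?hffN ?hQ ?hw ?Hnu //= !pnatr_eq0 -!lt0n !fact_gt0 //.
Qed.

Lemma term_eq (R : realType) (N nu X : R) (n i : nat) : 0 < N -> nu != 0 ->
  nu = N + 2^-1 - n%:R -> pch (nu + 2^-1) n != 0 ->
  ((u2 nu N^-1 n i) * (X * Num.sqrt N) ^+ (n - 2 * i))%:C%C
  = (alpha n nu * n`!%:R)%:C%C * sqrtC ((nu / N)%:C%C) ^+ n * sqrtC ((1 + X ^+ 2)%:C%C) ^+ n
    * ((u1 N (- nu^-1) n i)%:C%C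
       * ((X%:C%C * sqrtC (nu%:C%C) / sqrtC ((1 + X ^+ 2)%:C%C)) ^+ (n - 2 * i)
       * (1 + (- nu^-1)%:C%C * (X%:C%C * sqrtC (nu%:C%C) / sqrtC ((1 + X ^+ 2)%:C%C)) ^+ 2) ^+ i)).
Proof.
move=> HN Hnu Hnudef Hp.
case: (leqP (2 * i) n) => Hin; last first.
  rewrite u2_out // u1_out // (mul0r (_ : R)) rmorph0 mul0r mulr0 //.
have [d Hd] : exists d, n = (2 * i + d)%N by exists (n - 2 * i)%N; lia.
subst n.
have -> : (2 * i + d - 2 * i = d)%N by lia.
set w := Num.sqrt N.
have Hw : 0 < w by rewrite sqrtr_gt0.
have HNw : N = w ^+ 2 by rewrite sqr_sqrtr // ltW.
set s := sqrtC nu%:C%C.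
set r := sqrtC (1 + X ^+ 2)%:C%C.
set q := sqrtC (N^-1)%:C%C.
have hs2 : s ^+ 2 = nu%:C%C by rewrite sqrtCK.
have hX : 0 < 1 + X ^+ 2 by have := sqr_ge0 X; lra.
have hr2 : r ^+ 2 = (1 + X ^+ 2)%:C%C by rewrite sqrtCK.
have hr0 : r != 0.
  rewrite sqrtC_eq0; apply/negP => /eqP H.
  by move: hX; rewrite (complexI H) ltxx.
have hw0 : w%:C%C != 0.
  by apply/negP => /eqP H; move: Hw; rewrite (complexI H) ltxx.
have hnu0 : nu%:C%C != 0.
  by apply/negP => /eqP H; move: Hnu; rewrite (complexI H) eqxx.
have hsq : sqrtC (nu / N)%:C%C = s * q.
  by rewrite rmorphM /= rootCMr // ler0c invr_ge0; apply: ltW.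
have hqw1 : q * w%:C%C = 1.
  have H1 : (q * w%:C%C) ^+ 2 = 1.
    rewrite exprMn sqrtCK -rmorphXn -rmorphM /= -HNw mulVf ?gt_eqF //.
  have H2 : 0 <= q * w%:C%C by rewrite mulr_ge0 ?sqrtC_ge0 ?ler0c ?invr_ge0 ?ltW.
  by rewrite -(sqrCK H2) H1 sqrtC1.
have hqw : q = (w%:C%C)^-1 by rewrite -[q](mulfK hw0) hqw1 mul1r.
have hG : 1 + (- nu^-1)%:C%C * (X%:C%C * s / r) ^+ 2 = (r ^+ 2)^-1.
  rewrite !exprMn exprVn hs2 hr2 rmorphN fmorphV /= rmorphD rmorph1 rmorphXn /=.
  field.
  have hX0 : (1 + X ^+ 2)%:C%C != 0.
    by apply/negP => /eqP H; move: hX; rewrite (complexI H) ltxx.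
  by move: hX0; rewrite rmorphD rmorph1 rmorphXn /= => ->; rewrite hnu0.
have hsk : forall k, s ^+ (2 * k) = nu%:C%C ^+ k by move=> k; rewrite exprM hs2.
have hs : s ^+ (2 * i + d) * s ^+ d = nu%:C%C ^+ i * nu%:C%C ^+ d.
  by rewrite -exprD (_ : (2 * i + d + d = 2 * (i + d))%N) ?hsk ?exprD //; lia.
have hr : r ^+ (2 * i + d) * ((r ^+ d)^-1 * ((r ^+ 2) ^+ i)^-1) = 1.
  rewrite exprD exprM; field.
  by rewrite !expf_neq0.
rewrite (@real_id _ N nu X w i d) //; last first.
  rewrite Hnudef; field.
  by [].
rewrite hsq hG hqw !exprMn !exprVn.
rewrite [RHS](_ : _ = (alpha (2 * i + d) nu * (2 * i + d)`!%:R)%:C%C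
   * (w%:C%C ^+ (2 * i + d))^-1 * (u1 N (- nu^-1) (2 * i + d) i)%:C%C * X%:C%C ^+ d
   * (s ^+ (2 * i + d) * s ^+ d) * (r ^+ (2 * i + d) * ((r ^+ d)^-1 * ((r ^+ 2) ^+ i)^-1)));
  last by ring.
rewrite hs hr mulr1.
move: (alpha (2 * i + d) nu * (2 * i + d)`!%:R) => A0.
move: (u1 N (- nu^-1) (2 * i + d) i) => U.
rewrite !rmorphM !rmorphXn /= ?exprVn fmorphV /= ?rmorphXn.
ring.
Qed.

Lemma eval_term (R : realType) (c u : R) (m i : nat) (z : R[i]) :
  (map_poly (real_complex R) (u *: ('X^m * Gp c ^+ i))).[z]
  = u%:C%C * (z ^+ m * (1 + c%:C%C * z ^+ 2) ^+ i).
Proof.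
rewrite /Gp -!mul_polyC !rmorphM !rmorphXn !rmorphD !rmorph1 !rmorphM /=.
by rewrite !map_polyC !map_polyX !hornerE.
Qed.

Theorem theorem3 (R : realType) (N : R) (n : nat) :
  0 < N ->
  let nu := N + 2^-1 - n%:R in
  nu != 0 ->
  pochhammer (nu + 2^-1) n != 0 ->
  forall X : R,
    (carinenaH n N (X * Num.sqrt N))%:C%C
    = (alpha n nu * n`!%:R)%:C%C
      * sqrtC ((nu / N)%:C%C) ^+ n
      * sqrtC ((1 + X ^+ 2)%:C%C) ^+ n
      * (map_poly (fun r : R => r%:C%C) (carinenaC n nu)).[
          X%:C%C * sqrtC (nu%:C%C) / sqrtC ((1 + X ^+ 2)%:C%C)].
Proof.
move=> HN nu Hnu Hp X.
have Hq : forall t, (t < n)%N -> nu + 2^-1 + t%:R != 0.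
  move=> t Ht; apply: contra Hp => /eqP H; apply/eqP.
  by rewrite /pochhammer (bigD1 (Ordinal Ht)) //= H mul0r.
rewrite carH_eq // carC_eq //.
have -> : n%:R - N - 2^-1 = - nu by rewrite /nu; ring.
have -> : n%:R + nu - 2^-1 = N by rewrite /nu; ring.
rewrite R2 // R1.
rewrite map_polyZ rmorph_sum hornerZ horner_sum horner_sum.
rewrite rmorphM rmorph_sum.
rewrite [RHS]mulrCA; congr (_ * _); rewrite mulr_sumr; apply: eq_bigr => i _.
rewrite hornerZ hornerXn eval_term.
by apply: term_eq.
Qed.
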